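(* Fix $\epsilon \in (0,0.1)$. Let $G_0\subset\mathbb{R}^2$ be the unit grid (union of the lines $x_1=k$, $x_2=k$, $k\in\mathbb{Z}$), $B(\epsilon)$ the Euclidean $\epsilon$-neighbourhood of $\mathbb{Z}^2$, and $G_\epsilon = (G_0 \setminus B(\epsilon)) \cup \partial B(\epsilon)$. Put $P_1=(0,-\epsilon)$, $P_2=(0,1-\epsilon)$, $P_3=(1,-\epsilon)$, $E_1=(-\epsilon,0)$, $E_2=(1-\epsilon,0)$, $L=(\epsilon,0)$, $M=(0,\epsilon)$. Consider the following paths in $G_\epsilon$: $a$ goes from $P_1$ along the circle $|x|=\epsilon$ through $E_1$ to $M$ (clockwise), then along the vertical grid segment to $P_2$; $b$ goes from $P_1$ along the circle $|x|=\epsilon$ to $L$ (counterclockwise quarter arc), then along the horizontal grid segment to $E_2$, then along the circle $|x-(1,0)|=\epsilon$ (clockwise quarter arc) to $P_3$; $c$ is the loop from $P_1$ once counterclockwise around the circle $|x|=\epsilon$ through $L, M, E_1$ back to $P_1$. Their projections to $G_\epsilon/\mathbb{Z}^2$ are loops generating $\pi_1(G_\epsilon/\mathbb{Z}^2, P_1)$, identified with the free group $\mathbb{F}_3=\langle a,b,c\rangle$. Let $r = aba^{-1}b^{-1}c$ and let $N$ be its normal closure in $\mathbb{F}_3$. For $w \in N$, let $\gamma'(w)$ be the closed curve in $G_\epsilon$ starting at $P_1$ obtained by lifting the loop $w$, and let $\gamma(w)$ be a geometrically irreducible cycle in $G_\epsilon$ freely homotopic in $G_\epsilon$ to $\gamma'(w)$.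 Then for every cyclically reduced word $w \in N$, $$l(w) \leq (1-2\epsilon)^{-1}\,\mathrm{Length}(\gamma(w)),$$ where $l(w)$ is the number of occurrences of the letters $a^{\pm1}, b^{\pm1}$ in $w$ and $\mathrm{Length}$ is Euclidean length.
   Context: A 1-cycle on $G_\epsilon$ is geometrically irreducible if it has no pair of consecutive edges which coincide but have opposite orientations. Elements of $N$ lie in the kernel of the homomorphism $\mathbb{F}_3\to\mathbb{Z}^2$ sending $a\mapsto(0,1)$, $b\mapsto(1,0)$, $c\mapsto 0$, so their lifts to $G_\epsilon$ are closed. *)

(* Defs.v *)
From Stdlib Require Import Reals ZArith List Relations.
Import ListNotations.
Open Scope R_scope.

(* G_eps = (G_0 \ B(eps)) u dB(eps) is a graph embedded in R^2.
   Vertices: the points z + eps*d, z in Z^2, d in {E,N,W,S} (unit vectors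
   (1,0),(0,1),(-1,0),(0,-1)), i.e. where the grid lines meet the circles
   |x - z| = eps.
   Edges:
   - Arc z d   : the counterclockwise quarter arc of |x - z| = eps from
                 z + eps*d to z + eps*(ccw d); Euclidean length eps*PI/2;
   - HSeg z    : the horizontal segment from z+(eps,0) to z+(1-eps,0);
   - VSeg z    : the vertical segment from z+(0,eps) to z+(0,1-eps);
                 segments have length 1 - 2 eps. *)

Inductive dir := DE | DN | DW | DS.

Definition ccw (d : dir) : dir :=
  match d with DE => DN | DN => DW | DW => DS | DS => DE end.

Definition pt := (Z * Z)%type.
Definition zadd (z w : pt) : pt := ((fst z + fst w)%Z, (snd z + snd w)%Z).
Definition zsub (z w : pt) : pt := ((fst z - fst w)%Z, (snd z - snd w)%Z).

Definition vertex := (pt * dir)%type.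

Inductive edge := Arc (z : pt) (d : dir) | HSeg (z : pt) | VSeg (z : pt).

Definition src (e : edge) : vertex :=
  match e with Arc z d => (z, d) | HSeg z => (z, DE) | VSeg z => (z, DN) end.
Definition tgt (e : edge) : vertex :=
  match e with
  | Arc z d => (z, ccw d)
  | HSeg z => (zadd z (1%Z, 0%Z), DW)
  | VSeg z => (zadd z (0%Z, 1%Z), DS)
  end.

Definition edge_length (eps : R) (e : edge) : R :=
  match e with Arc _ _ => eps * PI / 2 | _ => 1 - 2 * eps end.

Definition oedge := (edge * bool)%type.
Definition osrc (o : oedge) : vertex := if snd o then src (fst o) else tgt (fst o).
Definition otgt (o : oedge) : vertex := if snd o then tgt (fst o) else src (fst o).
Definition orev (o : oedge) : oedge := (fst o, negb (snd o)).

Fixpoint is_path (v : vertex) (p : list oedge) : Prop :=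
  match p with
  | [] => True
  | o :: p' => osrc o = v /\ is_path (otgt o) p'
  end.

Fixpoint path_end (v : vertex) (p : list oedge) : vertex :=
  match p with [] => v | o :: p' => path_end (otgt o) p' end.

Definition cycle := (vertex * list oedge)%type.

Definition is_cycle (g : cycle) : Prop :=
  is_path (fst g) (snd g) /\ path_end (fst g) (snd g) = fst g.

Definition geom_irreducible (p : list oedge) : Prop :=
  (~ exists l1 o l2, p = l1 ++ o :: orev o :: l2) /\
  (~ exists o m, p = o :: m ++ [orev o]).

(* elementary free homotopies of closed edge paths in the graph:
   removing a backtrack, or rotating the cycle (moving the base point) *)
Inductive cyc_step : cycle -> cycle -> Prop :=
  | cs_cancel v l1 o l2 :
      is_cycle (v, l1 ++ o :: orev o :: l2) ->
      cyc_step (v, l1 ++ o :: orev o :: l2) (v, l1 ++ l2)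
  | cs_rot v o l :
      is_cycle (v, o :: l) ->
      cyc_step (v, o :: l) (otgt o, l ++ [o]).

Definition freely_homotopic : cycle -> cycle -> Prop :=
  clos_refl_sym_trans cycle cyc_step.

Definition path_length (eps : R) (p : list oedge) : R :=
  fold_right (fun o acc => edge_length eps (fst o) + acc) 0 p.

Inductive gen := Ga | Gb | Gc.
Definition letter := (gen * bool)%type.  (* true: g, false: g^-1 *)
Definition word := list letter.
Definition linv (x : letter) : letter := (fst x, negb (snd x)).
Definition winv (w : word) : word := rev (map linv w).

Definition reduced (w : word) : Prop :=
  ~ exists l1 x l2, w = l1 ++ x :: linv x :: l2.
Definition cyclically_reduced (w : word) : Prop :=
  reduced w /\ ~ exists x m, w = x :: m ++ [linv x].

Inductive free_step : word -> word -> Prop :=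
  | fs_cancel l1 x l2 : free_step (l1 ++ x :: linv x :: l2) (l1 ++ l2).
Definition free_eq : word -> word -> Prop := clos_refl_sym_trans word free_step.

Definition rel_r : word := [(Ga, true); (Gb, true); (Ga, false); (Gb, false); (Gc, true)].

Definition in_N (w : word) : Prop :=
  exists cs : list (word * bool),
    free_eq w (concat (map (fun us : word * bool => fst us ++ (if snd us then rel_r else winv rel_r)
                                         ++ winv (fst us)) cs)).

Definition lab (w : word) : nat :=
  length (filter (fun x => match fst x with Gc => false | _ => true end) w).

(* P1 translated by z is the vertex (z, DS). *)
Definition gen_path (z : pt) (g : gen) : list oedge :=
  match g with
  | Ga => (* clockwise S -> W -> N, then vertical segment up to (z+(0,1), S) *)
      [(Arc z DW, false); (Arc z DN, false); (VSeg z, true)]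
  | Gb => (* ccw S -> E, horizontal segment to (z+(1,0), W), quarter arc W -> S *)
      [(Arc z DS, true); (HSeg z, true); (Arc (zadd z (1%Z, 0%Z)) DW, true)]
  | Gc =>
      [(Arc z DS, true); (Arc z DE, true); (Arc z DN, true); (Arc z DW, true)]
  end.

Definition gen_disp (g : gen) : pt :=
  match g with Ga => (0%Z, 1%Z) | Gb => (1%Z, 0%Z) | Gc => (0%Z, 0%Z) end.

Fixpoint lift (z : pt) (w : word) : list oedge :=
  match w with
  | [] => []
  | (g, true) :: w' => gen_path z g ++ lift (zadd z (gen_disp g)) w'
  | (g, false) :: w' =>
      rev (map orev (gen_path (zsub z (gen_disp g)) g))
        ++ lift (zsub z (gen_disp g)) w'
  end.

Definition gamma' (w : word) : cycle := (((0%Z, 0%Z), DS), lift (0%Z, 0%Z) w).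

(* Main.v *)
Require Import Defs.
From Stdlib Require Import Reals ZArith List Relations.
Open Scope R_scope.
Import ListNotations.
From Stdlib Require Import Lia Lra Classical.
Open Scope nat_scope.

Lemma gen_eq_dec : forall x y : gen, {x = y} + {x <> y}. Proof. decide equality. Qed.
Lemma letter_eq_dec : forall x y : letter, {x = y} + {x <> y}.
Proof. intros [g b] [g' b']. destruct (gen_eq_dec g g'); destruct (Bool.bool_dec b b');
  [left; congruence| right; congruence ..]. Qed.

Lemma linv_inv x : linv (linv x) = x.
Proof. destruct x; unfold linv; simpl; rewrite Bool.negb_involutive; reflexivity. Qed.
Lemma linv_inj x y : linv x = linv y -> x = y.
Proof. intro H. rewrite <- (linv_inv x), <- (linv_inv y), H. reflexivity. Qed.
Lemma winv_app a b : winv (a ++ b) = winv b ++ winv a.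
Proof. unfold winv. rewrite map_app, rev_app_distr. reflexivity. Qed.
Lemma winv_cons x a : winv (x :: a) = winv a ++ [linv x]. Proof. reflexivity. Qed.

Lemma lab_app a b : lab (a ++ b) = lab a + lab b.
Proof. unfold lab. rewrite filter_app, length_app. reflexivity. Qed.
Lemma lab_cons x a : lab (x :: a) = lab [x] + lab a.
Proof. apply (lab_app [x] a). Qed.
Lemma lab_linv x : lab [linv x] = lab [x].
Proof. destruct x as [[] []]; reflexivity. Qed.
Lemma lab_winv a : lab (winv a) = lab a.
Proof. induction a as [|x a IH]; [reflexivity|].
  rewrite winv_cons, lab_app, lab_linv, (lab_cons x a), IH. lia. Qed.

Lemma reduced_nil : reduced [].
Proof. intros [l1 [x [l2 H]]]. destruct l1; discriminate. Qed.
Lemma reduced_cons x l : reduced l -> (forall l', l <> linv x :: l') -> reduced (x :: l).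
Proof.
  intros Hr Hh [l1 [y [l2 H]]]. destruct l1 as [|z l1]; simpl in H.
  - injection H as -> ->. apply (Hh l2). reflexivity.
  - injection H as -> ->. apply Hr. eauto.
Qed.
Lemma reduced_tail x l : reduced (x :: l) -> reduced l.
Proof. intros Hr [l1 [y [l2 H]]]. apply Hr. exists (x :: l1), y, l2. rewrite H. reflexivity. Qed.
Lemma reduced_app_l a b : reduced (a ++ b) -> reduced a.
Proof. intros Hr [l1 [y [l2 H]]]. apply Hr. exists l1, y, (l2 ++ b). rewrite H, <- app_assoc. reflexivity. Qed.
Lemma reduced_app_r a b : reduced (a ++ b) -> reduced b.
Proof. intros Hr [l1 [y [l2 H]]]. apply Hr. exists (a ++ l1), y, l2. rewrite H, <- app_assoc. reflexivity. Qed.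
Lemma reduced_snoc l x : reduced l -> (forall l', l <> l' ++ [linv x]) -> reduced (l ++ [x]).
Proof.
  intros Hr Hl [l1 [y [l2 H]]].
  destruct l2 as [|t l2 _] using rev_ind.
  - assert (E: l ++ [x] = (l1 ++ [y]) ++ [linv y]) by (rewrite H, <- app_assoc; reflexivity).
    apply app_inj_tail in E as [E1 E2]. apply (Hl l1). rewrite E1, E2, linv_inv. reflexivity.
  - assert (E: l ++ [x] = (l1 ++ y :: linv y :: l2) ++ [t]) by (rewrite H, <- app_assoc; reflexivity).
    apply app_inj_tail in E as [E1 _]. apply Hr; eauto.
Qed.

Definition push (x : letter) (s : word) : word :=
  match s with
  | y :: s' => if letter_eq_dec y (linv x) then s' else x :: s
  | [] => [x]
  end.
Definition red (l : word) : word := fold_right push [] l.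
Lemma red_cons x l : red (x :: l) = push x (red l). Proof. reflexivity. Qed.
Lemma red_nil : red [] = []. Proof. reflexivity. Qed.
Arguments red l : simpl never.
Arguments push x s : simpl never.

Lemma push_reduced x s : reduced s -> reduced (push x s).
Proof. intros Hs. destruct s as [|y s']; unfold push.
 - apply reduced_cons; [apply reduced_nil| intros l' H; discriminate].
 - destruct (letter_eq_dec y (linv x)).
   + eapply reduced_tail; eauto.
   + apply reduced_cons; auto. intros l' H; inversion H; contradiction.
Qed.
Lemma red_reduced l : reduced (red l).
Proof. induction l; [apply reduced_nil | rewrite red_cons; apply push_reduced; auto]. Qed.
Lemma red_fix l : reduced l -> red l = l.
Proof. induction l as [|x l IH]; intro Hr; [reflexivity|].
  rewrite red_cons, IH by (eapply reduced_tail; eauto).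
  destruct l as [|y l']; unfold push; auto.
  destruct (letter_eq_dec y (linv x)); auto.
  exfalso; apply Hr; exists [], x, l'; subst; reflexivity. Qed.
Lemma red_app a b : red (a ++ b) = fold_right push (red b) a.
Proof. unfold red; apply fold_right_app. Qed.
Lemma red_xx x l : red (x :: linv x :: l) = red l.
Proof. rewrite !red_cons. generalize (red_reduced l). generalize (red l). intros r Hr.
  destruct r as [|y r']; unfold push.
  - destruct (letter_eq_dec (linv x) (linv x)); congruence.
  - destruct (letter_eq_dec y (linv (linv x))) as [E|E].
    + rewrite linv_inv in E; subst y. destruct r' as [|z r''].
      * reflexivity.
      * destruct (letter_eq_dec z (linv x)); [|reflexivity].
        subst; exfalso; apply Hr; exists [], x, r''; reflexivity.
    + destruct (letter_eq_dec (linv x) (linv x)); congruence.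
Qed.
Lemma red_cancel l1 x l2 : red (l1 ++ x :: linv x :: l2) = red (l1 ++ l2).
Proof. rewrite !red_app, red_xx. reflexivity. Qed.
Lemma red_mid p q s : red (p ++ q ++ s) = red (p ++ red q ++ s).
Proof. revert p. induction q as [|x q IH]; intro p; [reflexivity|].
  rewrite red_cons. simpl app.
  replace (p ++ x :: q ++ s) with ((p ++ [x]) ++ q ++ s) by (rewrite <- app_assoc; reflexivity).
  rewrite IH. rewrite <- app_assoc. simpl app.
  generalize (red q); intros r. destruct r as [|y r']; unfold push; [reflexivity|].
  destruct (letter_eq_dec y (linv x)); [|reflexivity]. subst y.
  simpl app. apply red_cancel.
Qed.
Lemma red_rot l x : red (l ++ [x]) = red (linv x :: red (x :: l) ++ [x]).
Proof. pose proof (red_mid [linv x] (x :: l) [x]) as H. simpl app in H. rewrite <- H.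
  pose proof (red_cancel [] (linv x) (l ++ [x])) as H2. rewrite linv_inv in H2.
  simpl app in H2. rewrite H2. reflexivity. Qed.
Definition cycred (m : word) : Prop := ~ exists x m', m = x :: m' ++ [linv x].
Definition CW (l : word) (k : nat) : Prop :=
  exists u m, red l = u ++ m ++ winv u /\ cycred m /\ lab m = k.

Lemma decomp_exists n : forall r, length r <= n -> exists u m, r = u ++ m ++ winv u /\ cycred m.
Proof.
  induction n as [|n IH]; intros r Hl.
  - destruct r; [|simpl in Hl; lia]. exists [], []. split; [reflexivity|].
    intros [x [m' H]]; discriminate.
  - destruct (classic (exists x m', r = x :: m' ++ [linv x])) as [[x [m' E]]|NE].
    + assert (Hm : length m' <= n) by (subst r; simpl in Hl; rewrite length_app in Hl; simpl in Hl; lia).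
      destruct (IH m' Hm) as [u [m [Em Hc]]]. exists (x :: u), m. split; auto.
      rewrite E, Em, winv_cons. simpl. rewrite !app_assoc. reflexivity.
    + exists [], r. split; auto. simpl. rewrite app_nil_r. reflexivity.
Qed.
Lemma CW_exists l : exists k, CW l k.
Proof. destruct (decomp_exists (length (red l)) (red l) (le_n _)) as [u [m [E H]]].
  exists (lab m), u, m. auto. Qed.

Lemma prefix_lem : forall (u u' X Y : word), u ++ X = u' ++ Y -> length u <= length u' ->
  exists v, u' = u ++ v.
Proof. induction u as [|a u IH]; intros u' X Y H Hl.
  - exists u'. reflexivity.
  - destruct u' as [|b u']; simpl in Hl; [lia|]. simpl in H. injection H as -> H.
    destruct (IH u' X Y H ltac:(lia)) as [v ->]. exists v. reflexivity. Qed.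

Lemma decomp_unique_aux u m u' m' : u ++ m ++ winv u = u' ++ m' ++ winv u' ->
  cycred m -> cycred m' -> length u <= length u' -> m = m'.
Proof. intros H Hc Hc' Hl.
  destruct (prefix_lem _ _ _ _ H Hl) as [v ->].
  rewrite winv_app, <- app_assoc in H. apply app_inv_head in H.
  rewrite !app_assoc in H. apply app_inv_tail in H.
  destruct v as [|y v].
  - simpl in H. rewrite app_nil_r in H. exact H.
  - exfalso. apply Hc. exists y, (v ++ m' ++ winv v). rewrite H, winv_cons. simpl.
    rewrite !app_assoc. reflexivity.
Qed.
Lemma decomp_unique u m u' m' : u ++ m ++ winv u = u' ++ m' ++ winv u' ->
  cycred m -> cycred m' -> m = m'.
Proof. intros H Hc Hc'. destruct (Nat.le_ge_cases (length u) (length u')).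
  - eapply decomp_unique_aux; eauto.
  - symmetry. eapply decomp_unique_aux; eauto. Qed.
Lemma CW_unique l k k' : CW l k -> CW l k' -> k = k'.
Proof. intros [u [m [E [H1 H2]]]] [u' [m' [E' [H1' H2']]]].
  rewrite E in E'. rewrite (decomp_unique _ _ _ _ E' H1 H1') in H2. congruence. Qed.

Lemma lab_push x s : lab (push x s) <= lab [x] + lab s.
Proof. destruct s as [|y s']; unfold push; [simpl; lia|].
  destruct (letter_eq_dec y (linv x)).
  - rewrite (lab_cons y s'). lia.
  - rewrite (lab_cons x (y :: s')). lia. Qed.
Lemma lab_red l : lab (red l) <= lab l.
Proof. induction l as [|x l IH]; [reflexivity|]. rewrite red_cons, (lab_cons x l).
  pose proof (lab_push x (red l)). lia. Qed.
Lemma CW_le l k : CW l k -> k <= lab l.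
Proof. intros [u [m [E [_ <-]]]]. pose proof (lab_red l). rewrite E, !lab_app in H. lia. Qed.

Lemma CW_cancel l1 x l2 k : CW (l1 ++ x :: linv x :: l2) k <-> CW (l1 ++ l2) k.
Proof. unfold CW. rewrite red_cancel. reflexivity. Qed.

Lemma cycred_nil : cycred []. Proof. intros [x [m' H]]; discriminate. Qed.

Lemma rot_core x r u m : reduced r -> r = u ++ m ++ winv u -> cycred m ->
  exists u2 m2, red (linv x :: r ++ [x]) = u2 ++ m2 ++ winv u2 /\ cycred m2 /\ lab m2 = lab m.
Proof.
  intros Hr Hrm Hc. destruct u as [|y u'].
  - simpl in Hrm. rewrite app_nil_r in Hrm. subst r.
    destruct m as [|z m0].
    + exists [], []. split; [|split; auto using cycred_nil].
      pose proof (red_cancel [] (linv x) []) as H. rewrite linv_inv in H. simpl app in H.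
      simpl app. rewrite H. reflexivity.
    + destruct (letter_eq_dec z x) as [->|Nzx].
      * pose proof (red_cancel [] (linv x) (m0 ++ [x])) as H. rewrite linv_inv in H. simpl app in H.
        simpl app. rewrite H.
        assert (Hs : reduced (m0 ++ [x])).
        { apply reduced_snoc; [eapply reduced_tail; eauto|].
          intros l' E. apply Hc. exists x, l'. rewrite E. reflexivity. }
        rewrite red_fix by exact Hs.
        exists [], (m0 ++ [x]). split; [simpl; rewrite app_nil_r; reflexivity|]. split.
        -- intros [y [m' E]]. destruct m0 as [|t m1].
           ++ simpl in E. injection E as _ E. destruct m'; discriminate.
           ++ simpl in E. injection E as -> E. apply app_inj_tail in E as [_ E].
              apply Hr. exists [], x, m1. rewrite E, linv_inv. reflexivity.
        -- rewrite lab_app, (lab_cons x m0). lia.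
      * destruct (classic (exists m1, z :: m0 = m1 ++ [linv x])) as [[m1 E]|NE].
        -- rewrite E. rewrite <- app_assoc. simpl app.
           pose proof (red_cancel (linv x :: m1) (linv x) []) as H. rewrite linv_inv in H.
           simpl app in H. rewrite app_nil_r in H. rewrite H.
           assert (Hm1 : reduced (linv x :: m1)).
           { apply reduced_cons; [rewrite E in Hr; eapply reduced_app_l; eauto|].
             intros l' E'. rewrite linv_inv in E'. subst m1. simpl in E.
             injection E as E _. contradiction. }
           rewrite red_fix by exact Hm1.
           exists [], (linv x :: m1). split; [simpl; rewrite app_nil_r; reflexivity|]. split.
           ++ intros [y [m' E']]. injection E' as <- E'. rewrite linv_inv in E'.
              apply Hr. rewrite E, E'. exists m', x, []. rewrite <- app_assoc. reflexivity.
           ++ rewrite lab_app, (lab_cons (linv x) m1), lab_linv. lia.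
        -- assert (Hs : reduced (linv x :: (z :: m0) ++ [x])).
           { apply reduced_cons.
             - apply reduced_snoc; auto. intros l' E. apply NE. eauto.
             - intros l' E. rewrite linv_inv in E. simpl in E. injection E as E _. contradiction. }
           rewrite red_fix by exact Hs.
           exists [linv x], (z :: m0). split; [|split; auto].
           unfold winv. simpl. rewrite linv_inv. reflexivity.
  - destruct (letter_eq_dec y x) as [->|Nyx].
    + assert (E : r = x :: (u' ++ m ++ winv u') ++ [linv x])
        by (rewrite Hrm, winv_cons; simpl; rewrite !app_assoc; reflexivity).
      replace (linv x :: r ++ [x]) with ([] ++ linv x :: linv (linv x) :: ((u' ++ m ++ winv u') ++ [linv x; x]))
        by (rewrite linv_inv, E; simpl; rewrite <- !app_assoc; reflexivity).
      rewrite red_cancel. simpl app.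
      replace ((u' ++ m ++ winv u') ++ [linv x; x]) with ((u' ++ m ++ winv u') ++ linv x :: linv (linv x) :: [])
        by (rewrite linv_inv; reflexivity).
      rewrite red_cancel, app_nil_r.
      rewrite red_fix.
      * exists u', m. auto.
      * rewrite E in Hr. apply reduced_tail in Hr. eapply reduced_app_l; eauto.
    + assert (Hs : reduced (linv x :: r ++ [x])).
      { apply reduced_cons.
        - apply reduced_snoc; auto. intros l' E.
          assert (E2 : r = (y :: u' ++ m ++ winv u') ++ [linv y])
            by (rewrite Hrm, winv_cons; simpl; rewrite !app_assoc; reflexivity).
          rewrite E2 in E. apply app_inj_tail in E as [_ E]. apply linv_inj in E. contradiction.
        - intros l' E. rewrite linv_inv, Hrm in E. simpl in E. injection E as E _. contradiction. }
      rewrite red_fix by exact Hs.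
      exists (linv x :: y :: u'), m. split; [|auto].
      rewrite Hrm, (winv_cons (linv x)), linv_inv. simpl. rewrite !app_assoc. reflexivity.
Qed.

Lemma CW_rot x l k : CW (x :: l) k -> CW (l ++ [x]) k.
Proof. intros [u [m [E [Hc <-]]]]. unfold CW. rewrite red_rot.
  destruct (rot_core x (red (x :: l)) u m (red_reduced _) E Hc) as [u2 [m2 [E2 [Hc2 Hl]]]].
  exists u2, m2. auto. Qed.

Inductive wstep : word -> word -> Prop :=
  | ws_cancel l1 x l2 : wstep (l1 ++ x :: linv x :: l2) (l1 ++ l2)
  | ws_rot x l : wstep (x :: l) (l ++ [x]).

Lemma CW_step s t : wstep s t -> forall k, CW s k <-> CW t k.
Proof. intros [l1 x l2|x l] k.
  - apply CW_cancel.
  - split; [apply CW_rot|]. intro Ht. destruct (CW_exists (x :: l)) as [k' Hk'].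
    pose proof (CW_rot _ _ _ Hk'). rewrite (CW_unique _ _ _ Ht H). exact Hk'. Qed.

Lemma CW_hw s t : clos_refl_sym_trans word wstep s t -> forall k, CW s k <-> CW t k.
Proof. induction 1; intro k.
  - apply CW_step; auto.
  - reflexivity.
  - symmetry; auto.
  - rewrite IHclos_refl_sym_trans1; auto. Qed.
Definition phi (o : oedge) : word :=
  match o with
  | (Arc _ DE, b) => [(Gc, b)]
  | (HSeg _, b) => [(Gb, b)]
  | (VSeg _, b) => [(Ga, b)]
  | _ => []
  end.
Fixpoint phis (l : list oedge) : word :=
  match l with [] => [] | o :: l' => phi o ++ phis l' end.
Lemma phis_app a b : phis (a ++ b) = phis a ++ phis b.
Proof. induction a; simpl; [reflexivity|]. rewrite IHa, app_assoc. reflexivity. Qed.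

Lemma phis_lift : forall w z, phis (lift z w) = w.
Proof. induction w as [|[g b] w IH]; intro z; [reflexivity|].
  destruct b; destruct g; simpl; rewrite IH; reflexivity. Qed.

Lemma phi_cases o : (phi o = [] /\ phi (orev o) = []) \/
  exists x, phi o = [x] /\ phi (orev o) = [linv x].
Proof. destruct o as [[z d|z|z] b]; [destruct d|..]; destruct b; simpl;
  first [left; split; reflexivity | right; eexists; split; reflexivity]. Qed.

Lemma step_map g1 g2 : cyc_step g1 g2 ->
  clos_refl_sym_trans word wstep (phis (snd g1)) (phis (snd g2)).
Proof. intros [v l1 o l2 _|v o l _]; simpl snd.
  - rewrite !phis_app. change (phis (o :: orev o :: l2)) with (phi o ++ phi (orev o) ++ phis l2).
    destruct (phi_cases o) as [[-> ->]|[x [-> ->]]].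
    + simpl. apply rst_refl.
    + simpl. apply rst_step. apply ws_cancel.
  - rewrite phis_app. simpl phis. rewrite app_nil_r.
    destruct (phi_cases o) as [[-> _]|[x [-> _]]].
    + simpl. rewrite app_nil_r. apply rst_refl.
    + simpl. apply rst_step. apply ws_rot.
Qed.

Lemma homot_map g1 g2 : freely_homotopic g1 g2 ->
  clos_refl_sym_trans word wstep (phis (snd g1)) (phis (snd g2)).
Proof. induction 1.
  - apply step_map; auto.
  - apply rst_refl.
  - apply rst_sym; auto.
  - eapply rst_trans; eauto. Qed.

Open Scope R_scope.

Lemma len_bound eps l : 0 < eps -> (1 - 2*eps) * INR (lab (phis l)) <= path_length eps l.
Proof. intro He. pose proof PI_RGT_0. induction l as [|o l IH]; simpl.
  - lra.
  - rewrite lab_app, plus_INR. assert (0 <= eps * PI / 2) by (apply Rmult_le_pos; [apply Rmult_le_pos|]; lra).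
    destruct o as [[z d|z|z] b]; [destruct d|..]; destruct b; simpl; lra.
Qed.

Theorem lemma2p2 (eps : R) (heps : 0 < eps < 1/10) (w : word) (gam : cycle) :
  in_N w -> cyclically_reduced w ->
  is_cycle gam -> geom_irreducible (snd gam) ->
  freely_homotopic (gamma' w) gam ->
  INR (lab w) <= / (1 - 2 * eps) * path_length eps (snd gam).
Proof.
  intros _ [Hred Hcyc] _ _ Hh.
  apply homot_map in Hh. simpl snd in Hh. rewrite phis_lift in Hh.
  assert (Hw : CW w (lab w)).
  { exists [], w. rewrite red_fix by exact Hred. simpl. rewrite app_nil_r. auto. }
  apply (CW_hw _ _ Hh) in Hw. apply CW_le in Hw. apply le_INR in Hw.
  pose proof (len_bound eps (snd gam) (proj1 heps)).
  assert (Hp : 0 < 1 - 2 * eps) by lra.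
  apply Rle_trans with (INR (lab (phis (snd gam)))); auto.
  replace (INR (lab (phis (snd gam)))) with (/ (1 - 2*eps) * ((1 - 2*eps) * INR (lab (phis (snd gam)))))
    by (field; lra).
  apply Rmult_le_compat_l; [left; apply Rinv_0_lt_compat; lra | auto].
Qed.
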